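(* Under the standing assumptions below, one of the following holds: (II') there exist maps $h_1:M\to M'$ and $p_1:N\to N'$ such that for all $m\in M$, $n\in N$: $\phi\left(\left[\begin{smallmatrix} 0 & m\\ 0 & 1\end{smallmatrix}\right]\right)=\left[\begin{smallmatrix} 0 & h_1(m)\\ p_1(0) & 1\end{smallmatrix}\right]$ and $\phi\left(\left[\begin{smallmatrix} 0 & 0\\ n & 1\end{smallmatrix}\right]\right)=\left[\begin{smallmatrix} 0 & h_1(0)\\ p_1(n) & 1\end{smallmatrix}\right]$; (II'') there exist maps $h_2:N\to M'$ and $p_2:M\to N'$ such that for all $m\in M$, $n\in N$: $\phi\left(\left[\begin{smallmatrix} 0 & m\\ 0 & 1\end{smallmatrix}\right]\right)=\left[\begin{smallmatrix} 1 & h_2(0)\\ p_2(m) & 0\end{smallmatrix}\right]$ and $\phi\left(\left[\begin{smallmatrix} 0 & 0\\ n & 1\end{smallmatrix}\right]\right)=\left[\begin{smallmatrix} 1 & h_2(n)\\ p_2(0) & 0\end{smallmatrix}\right]$.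
   Context: All rings have an identity $1\neq 0$. Standing assumptions: $R,S,R',S'$ are rings whose only idempotents are $0$ and $1$; $M$ is an $R$-$S$-bimodule, $N$ an $S$-$R$-bimodule, $M'$ an $R'$-$S'$-bimodule, $N'$ an $S'$-$R'$-bimodule; $T=\left[\begin{smallmatrix} R & M\\ N & S\end{smallmatrix}\right]$ and $T'=\left[\begin{smallmatrix} R' & M'\\ N' & S'\end{smallmatrix}\right]$ are the Morita context rings with both Morita maps zero, i.e. the sets of formal matrices with entrywise addition and product $\left[\begin{smallmatrix} r & m\\ n & s\end{smallmatrix}\right]\left[\begin{smallmatrix} r' & m'\\ n' & s'\end{smallmatrix}\right]=\left[\begin{smallmatrix} rr' & rm'+ms'\\ nr'+sn' & ss'\end{smallmatrix}\right]$; and $\phi:T\to T'$ is a ring isomorphism. *)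

(* Defs.v *)
From HB Require Import structures.
From mathcomp Require Import all_boot all_order all_algebra.
Set Implicit Arguments. Unset Strict Implicit. Unset Printing Implicit Defensive.
Import GRing.Theory.
Local Open Scope ring_scope.

Definition only_trivial_idempotents (R : nzRingType) : Prop :=
  forall e : R, e * e = e -> e = 0 \/ e = 1.

Definition is_bimodule (R S : nzRingType) (M : zmodType)
  (l : R -> M -> M) (r : M -> S -> M) : Prop :=
  (forall m, l 1 m = m) /\
  (forall a b m, l (a * b) m = l a (l b m)) /\
  (forall a b m, l (a + b) m = l a m + l b m) /\
  (forall a m m', l a (m + m') = l a m + l a m') /\
  (forall m, r m 1 = m) /\
  (forall m s t, r m (s * t) = r (r m s) t) /\
  (forall m s t, r m (s + t) = r m s + r m t) /\
  (forall m m' s, r (m + m') s = r m s + r m' s) /\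
  (forall a m s, l a (r m s) = r (l a m) s).

(* Formal 2x2 matrices [[r, m], [n, s]] : elements of the Morita context ring. *)
Record mc (R M N S : Type) := MC { m11 : R; m12 : M; m21 : N; m22 : S }.
Arguments MC {R M N S}.

Section MoritaContext.
Variables (R S : nzRingType) (M N : zmodType).
Variables (lRM : R -> M -> M) (rMS : M -> S -> M)
          (lSN : S -> N -> N) (rNR : N -> R -> N).

Definition mc_add (x y : mc R M N S) : mc R M N S :=
  MC (m11 x + m11 y) (m12 x + m12 y) (m21 x + m21 y) (m22 x + m22 y).

(* Product with both Morita maps zero. *)
Definition mc_mul (x y : mc R M N S) : mc R M N S :=
  MC (m11 x * m11 y)
     (lRM (m11 x) (m12 y) + rMS (m12 x) (m22 y))
     (rNR (m21 x) (m11 y) + lSN (m22 x) (m21 y))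
     (m22 x * m22 y).

Definition mc_one : mc R M N S := MC 1 0 0 1.
End MoritaContext.

Definition mc_ring_iso (R S R' S' : nzRingType) (M N M' N' : zmodType)
  (lRM : R -> M -> M) (rMS : M -> S -> M) (lSN : S -> N -> N) (rNR : N -> R -> N)
  (lRM' : R' -> M' -> M') (rMS' : M' -> S' -> M')
  (lSN' : S' -> N' -> N') (rNR' : N' -> R' -> N')
  (phi : mc R M N S -> mc R' M' N' S') : Prop :=
  [/\ bijective phi,
      (forall x y, phi (mc_add x y) = mc_add (phi x) (phi y)),
      (forall x y, phi (mc_mul lRM rMS lSN rNR x y)
                   = mc_mul lRM' rMS' lSN' rNR' (phi x) (phi y))
    & phi (mc_one R S M N) = mc_one R' S' M' N'].

(* Main.v *)
Require Import Defs.
From HB Require Import structures.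
From mathcomp Require Import all_boot all_order all_algebra.
Local Open Scope ring_scope.
Import GRing.Theory.

Lemma dbl0 (V : zmodType) (x : V) : x = x + x -> x = 0.
Proof. move=> /(congr1 (fun y => y - x)) /=; rewrite subrr addrK => <-. by []. Qed.

Lemma bimod0 {R S : nzRingType} {M : zmodType} {l : R -> M -> M} {r : M -> S -> M} :
  is_bimodule l r ->
  ((forall m, l 0 m = 0) * (forall a, l a 0 = 0) * (forall s, r 0 s = 0) *
      (forall m, r m 0 = 0) * (forall m, l 1 m = m) * (forall m, r m 1 = m))%type.
Proof.
move=> [l1 [_ [lD [ldD [r1 [_ [rD [rdD _]]]]]]]]; do ! split => //.
- by move=> m; apply: dbl0; rewrite -lD addr0.
- by move=> a; apply: dbl0; rewrite -ldD addr0.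
- by move=> s; apply: dbl0; rewrite -rdD addr0.
- by move=> m; apply: dbl0; rewrite -rD addr0.
Qed.

Theorem corollary4p6 (R S R' S' : nzRingType) (M N M' N' : zmodType)
  (lRM : R -> M -> M) (rMS : M -> S -> M) (lSN : S -> N -> N) (rNR : N -> R -> N)
  (lRM' : R' -> M' -> M') (rMS' : M' -> S' -> M')
  (lSN' : S' -> N' -> N') (rNR' : N' -> R' -> N')
  (idR : only_trivial_idempotents R) (idS : only_trivial_idempotents S)
  (idR' : only_trivial_idempotents R') (idS' : only_trivial_idempotents S')
  (HM : is_bimodule lRM rMS) (HN : is_bimodule lSN rNR)
  (HM' : is_bimodule lRM' rMS') (HN' : is_bimodule lSN' rNR')
  (phi : mc R M N S -> mc R' M' N' S')
  (Hphi : mc_ring_iso lRM rMS lSN rNR lRM' rMS' lSN' rNR' phi) :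
  (exists (h1 : M -> M') (p1 : N -> N'),
      (forall m : M, phi (MC 0 m 0 1) = MC 0 (h1 m) (p1 0) 1) /\
      (forall n : N, phi (MC 0 0 n 1) = MC 0 (h1 0) (p1 n) 1))
  \/
  (exists (h2 : N -> M') (p2 : M -> N'),
      (forall m : M, phi (MC 0 m 0 1) = MC 1 (h2 0) (p2 m) 0) /\
      (forall n : N, phi (MC 0 0 n 1) = MC 1 (h2 n) (p2 0) 0)).
Proof.
move: Hphi => [[g phiK gK] phiD phiM phi1].
have inj := can_inj phiK.
have [[[[[lM0 lM0'] rM0] rM0'] lM1] rM1] := bimod0 HM.
have [[[[[lN0 lN0'] rN0] rN0'] lN1] rN1] := bimod0 HN.
have [[[[[lM'0 lM'0'] rM'0] rM'0'] lM'1] rM'1] := bimod0 HM'.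
have [[[[[lN'0 lN'0'] rN'0] rN'0'] lN'1] rN'1] := bimod0 HN'.
have phi0 : phi (MC 0 0 0 0) = MC 0 0 0 0.
  have := phiD (MC 0 0 0 0) (MC 0 0 0 0); rewrite /mc_add /= !addr0.
  case: (phi (MC 0 0 0 0)) => a b c d; rewrite /=.
  by case=> /dbl0 -> /dbl0 -> /dbl0 -> /dbl0 ->.
pose e : mc R M N S := MC 0 0 0 1.
have ee : mc_mul lRM rMS lSN rNR e e = e.
  by rewrite /mc_mul /= ?lM0 ?lM0' ?rM0 ?rM0' ?rN0 ?rN0' ?lN0 ?lN0' ?lN1 ?rM1 ?addr0 ?add0r ?mulr0 ?mul0r ?mulr1 ?mul1r.
have ez m : mc_mul lRM rMS lSN rNR e (MC 0 m 0 0) = MC 0 0 0 0.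
  by rewrite /mc_mul /= ?lM0 ?lM0' ?rM0 ?rM0' ?rN0 ?rN0' ?lN0 ?lN0' ?lN1 ?rM1 ?addr0 ?add0r ?mulr0 ?mul0r ?mulr1 ?mul1r.
have ze m : mc_mul lRM rMS lSN rNR (MC 0 m 0 0) e = MC 0 m 0 0.
  by rewrite /mc_mul /= ?lM0 ?lM0' ?rM0 ?rM0' ?rN0 ?rN0' ?lN0 ?lN0' ?lN1 ?rM1 ?addr0 ?add0r ?mulr0 ?mul0r ?mulr1 ?mul1r.
have ey n : mc_mul lRM rMS lSN rNR e (MC 0 0 n 0) = MC 0 0 n 0.
  by rewrite /mc_mul /= ?lM0 ?lM0' ?rM0 ?rM0' ?rN0 ?rN0' ?lN0 ?lN0' ?lN1 ?rM1 ?addr0 ?add0r ?mulr0 ?mul0r ?mulr1 ?mul1r.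
have ye n : mc_mul lRM rMS lSN rNR (MC 0 0 n 0) e = MC 0 0 0 0.
  by rewrite /mc_mul /= ?lM0 ?lM0' ?rM0 ?rM0' ?rN0 ?rN0' ?lN0 ?lN0' ?lN1 ?rM1 ?addr0 ?add0r ?mulr0 ?mul0r ?mulr1 ?mul1r.
have fidem := phiM e e; rewrite ee in fidem.
case Ef: (phi e) fidem => [a u v b]; rewrite /mc_mul /= => -[Ha Hu Hv Hb].
have xm m : phi (MC 0 m 0 1) = mc_add (MC a u v b) (phi (MC 0 m 0 0)).
  rewrite -Ef -phiD; congr phi; by rewrite /mc_add /= !addr0 add0r.
have yn n : phi (MC 0 0 n 1) = mc_add (MC a u v b) (phi (MC 0 0 n 0)).
  rewrite -Ef -phiD; congr phi; by rewrite /mc_add /= !addr0 add0r.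
have Ee : phi (MC 0 0 0 1) = MC a u v b by exact: Ef.
have hz1 m : mc_mul lRM' rMS' lSN' rNR' (MC a u v b) (phi (MC 0 m 0 0)) = MC 0 0 0 0.
  by rewrite -Ef -phiM ez phi0.
have hz2 m : mc_mul lRM' rMS' lSN' rNR' (phi (MC 0 m 0 0)) (MC a u v b) = phi (MC 0 m 0 0).
  by rewrite -Ef -phiM ze.
have hy1 n : mc_mul lRM' rMS' lSN' rNR' (MC a u v b) (phi (MC 0 0 n 0)) = phi (MC 0 0 n 0).
  by rewrite -Ef -phiM ey.
have hy2 n : mc_mul lRM' rMS' lSN' rNR' (phi (MC 0 0 n 0)) (MC a u v b) = MC 0 0 0 0.
  by rewrite -Ef -phiM ye phi0.
case: (idR' a (esym Ha)) => Ea; case: (idS' b (esym Hb)) => Eb; subst a b.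
- exfalso.
  move: Hu; rewrite lM'0 rM'0' addr0 => Hu.
  move: Hv; rewrite lN'0 rN'0' addr0 => Hv.
  subst u v; rewrite -phi0 in Ee.
  by move: (inj _ _ Ee) => /(congr1 (@m22 _ _ _ _)) /= /eqP; rewrite oner_eq0.
- left.
  exists (fun m => m12 (phi (MC 0 m 0 1))), (fun n => m21 (phi (MC 0 0 n 1))).
  split => [m|n] /=; rewrite Ee.
  + rewrite xm.
    move: (hz1 m) (hz2 m); case: (phi (MC 0 m 0 0)) => c p q d.
    rewrite /mc_mul /mc_add /= => -[E11 E12 E21 E22] -[F11 F12 F21 F22].
    move: E22; rewrite mul1r => Ed; subst d.
    move: F11; rewrite mulr0 => Ec; subst c.
    move: E21; rewrite rN'0' lN'1 add0r => Eq; subst q.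
    by rewrite !addr0.
  + rewrite yn.
    move: (hy1 n) (hy2 n); case: (phi (MC 0 0 n 0)) => c p q d.
    rewrite /mc_mul /mc_add /= => -[E11 E12 E21 E22] -[F11 F12 F21 F22].
    move: E11; rewrite mul0r => Ec; subst c.
    move: F22; rewrite mulr1 => Ed; subst d.
    move: F12; rewrite lM'0 rM'1 add0r => Ep; subst p.
    by rewrite !addr0.
- right.
  exists (fun n => m12 (phi (MC 0 0 n 1))), (fun m => m21 (phi (MC 0 m 0 1))).
  split => [m|n] /=; rewrite Ee.
  + rewrite xm.
    move: (hz1 m) (hz2 m); case: (phi (MC 0 m 0 0)) => c p q d.
    rewrite /mc_mul /mc_add /= => -[E11 E12 E21 E22] -[F11 F12 F21 F22].
    move: E11; rewrite mul1r => Ec; subst c.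
    move: F22; rewrite mulr0 => Ed; subst d.
    move: E12; rewrite lM'1 rM'0' addr0 => Ep; subst p.
    by rewrite !addr0.
  + rewrite yn.
    move: (hy1 n) (hy2 n); case: (phi (MC 0 0 n 0)) => c p q d.
    rewrite /mc_mul /mc_add /= => -[E11 E12 E21 E22] -[F11 F12 F21 F22].
    move: F11; rewrite mulr1 => Ec; subst c.
    move: E22; rewrite mul0r => Ed; subst d.
    move: F21; rewrite rN'1 lN'0 addr0 => Eq; subst q.
    by rewrite !addr0.
- exfalso.
  move: Hu; rewrite lM'1 rM'1 => /dbl0 Hu.
  move: Hv; rewrite lN'1 rN'1 => /dbl0 Hv.
  subst u v; have Ee1 : phi (MC 0 0 0 1) = phi (mc_one R S M N) by rewrite Ee phi1.
  clear Ee; rename Ee1 into Ee.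
  by move: (inj _ _ Ee) => /(congr1 (@m11 _ _ _ _)) /= /eqP; rewrite eq_sym oner_eq0.
Qed.
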